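(* Let $\tilde{\mathbf{x}}=(x_s)\in(\mathbb{C}^* )^L$ satisfy the K-hexahedron equations. (a) For each $i\in\mathbb{Z}$ let $\alpha_i,\beta_i,\gamma_i\in\{-1,1\}$, and define $\tilde{\mathbf{y}}=(y_s)\in(\mathbb{C}^* )^L$ by $y_{(a,b,c)}=x_{(a,b,c)}$, $y_{(a,b+\frac12,c+\frac12)}=\beta_b\gamma_c\,x_{(a,b+\frac12,c+\frac12)}$, $y_{(a+\frac12,b,c+\frac12)}=\alpha_a\gamma_c\,x_{(a+\frac12,b,c+\frac12)}$, $y_{(a+\frac12,b+\frac12,c)}=\alpha_a\beta_b\,x_{(a+\frac12,b+\frac12,c)}$ for all $(a,b,c)\in\mathbb{Z}^3$. Then $\tilde{\mathbf{y}}$ satisfies the K-hexahedron equations. (b) Conversely, if $\tilde{\mathbf{y}}=(y_s)\in(\mathbb{C}^* )^L$ satisfies the K-hexahedron equations and $y_s=x_s$ for all $s\in\mathbb{Z}^3$, then there exist signs $\alpha_i,\beta_i,\gamma_i\in\{-1,1\}$, $i\in\mathbb{Z}$, such that $\tilde{\mathbf{y}}$ is given by the formulas in (a) for all $(a,b,c)\in\mathbb{Z}^3$.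
   Context: $L=\{(i,j,k)\in\mathbb{R}^3: 2i,2j,2k,i+j+k\in\mathbb{Z}\}$, i.e. $\mathbb{Z}^3$ together with the centers of unit squares with vertices in $\mathbb{Z}^3$. An array $\tilde{\mathbf{x}}=(x_s)\in\mathbb{C}^L$ with $x_s\ne0$ for $s\in\mathbb{Z}^3$ satisfies the K-hexahedron equations if (i) for every $s\in L\setminus\mathbb{Z}^3$, $x_s^2=x_{v_1}x_{v_3}+x_{v_2}x_{v_4}$, where $v_1,v_2,v_3,v_4$ are the vertices in cyclic order of the unit square centered at $s$; and (ii) for every $v\in\mathbb{Z}^3$, writing $z_{ijk}=x_{v+(i,j,k)}$: $z_{1\frac12\frac12}=(z_{\frac120\frac12}z_{\frac12\frac120}+z_{0\frac12\frac12}z_{100})/z_{000}$, $z_{\frac121\frac12}=(z_{0\frac12\frac12}z_{\frac12\frac120}+z_{\frac120\frac12}z_{010})/z_{000}$, $z_{\frac12\frac121}=(z_{0\frac12\frac12}z_{\frac120\frac12}+z_{\frac12\frac120}z_{001})/z_{000}$, $z_{111}=(A+2z_{0\frac12\frac12}z_{\frac120\frac12}z_{\frac12\frac120})/z_{000}^2$ with $A=2z_{100}z_{010}z_{001}+z_{000}(z_{100}z_{011}+z_{010}z_{101}+z_{001}z_{110})$. *)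

(* Defs.v *)
From mathcomp Require Import Rstruct.
From HB Require Import structures.
From mathcomp Require Import all_boot all_order all_algebra.
From mathcomp Require Import complex.
Set Implicit Arguments. Unset Strict Implicit. Unset Printing Implicit Defensive.
Import Order.TTheory GRing.Theory Num.Theory.
Local Open Scope ring_scope.

Definition C : Type := complex Rdefinitions.R.

(* Points of L = { s in (1/2 Z)^3 : 2i,2j,2k, i+j+k in Z } are encoded by
   their DOUBLED coordinates (p,q,r) in Z^3 with p+q+r even.
   Z^3 corresponds to (2a,2b,2c); face centres have exactly two odd coords.
   An array in C^L is a function int -> int -> int -> C (values at triples
   outside L are irrelevant and never used). *)
Definition arr := int -> int -> int -> C.

Definition inL (p q r : int) : Prop := exists k : int, p + q + r = 2 * k.

Definition nonzero_on_L (x : arr) : Prop :=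
  forall p q r, inL p q r -> x p q r != 0.

Definition KHex (x : arr) : Prop :=
  (forall a b c : int, x (2*a) (2*b) (2*c) != 0) /\
  (forall a b c : int,
      x (2*a) (2*b+1) (2*c+1) ^+ 2 =
        x (2*a) (2*b) (2*c) * x (2*a) (2*b+2) (2*c+2)
      + x (2*a) (2*b+2) (2*c) * x (2*a) (2*b) (2*c+2)) /\
  (forall a b c : int,
      x (2*a+1) (2*b) (2*c+1) ^+ 2 =
        x (2*a) (2*b) (2*c) * x (2*a+2) (2*b) (2*c+2)
      + x (2*a+2) (2*b) (2*c) * x (2*a) (2*b) (2*c+2)) /\
  (forall a b c : int,
      x (2*a+1) (2*b+1) (2*c) ^+ 2 =
        x (2*a) (2*b) (2*c) * x (2*a+2) (2*b+2) (2*c)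
      + x (2*a+2) (2*b) (2*c) * x (2*a) (2*b+2) (2*c)) /\
  (* (ii) hexahedron equations at v = (a,b,c); z i j k = x_{v + (i,j,k)/2} *)
  (forall a b c : int,
     let z := fun i j k : int => x (2*a + i) (2*b + j) (2*c + k) in
     [/\ z 2 1 1 = (z 1 0 1 * z 1 1 0 + z 0 1 1 * z 2 0 0) / z 0 0 0,
         z 1 2 1 = (z 0 1 1 * z 1 1 0 + z 1 0 1 * z 0 2 0) / z 0 0 0,
         z 1 1 2 = (z 0 1 1 * z 1 0 1 + z 1 1 0 * z 0 0 2) / z 0 0 0 &
         z 2 2 2 =
           (2 * z 2 0 0 * z 0 2 0 * z 0 0 2
            + z 0 0 0 * (z 2 0 0 * z 0 2 2 + z 0 2 0 * z 2 0 2
                         + z 0 0 2 * z 2 2 0)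
            + 2 * z 0 1 1 * z 1 0 1 * z 1 1 0) / z 0 0 0 ^+ 2]).

Definition is_sign (e : C) : Prop := e = 1 \/ e = -1.

Definition sign_twist (al be ga : int -> C) (x y : arr) : Prop :=
  forall a b c : int,
    [/\ y (2*a) (2*b) (2*c) = x (2*a) (2*b) (2*c),
        y (2*a) (2*b+1) (2*c+1) = be b * ga c * x (2*a) (2*b+1) (2*c+1),
        y (2*a+1) (2*b) (2*c+1) = al a * ga c * x (2*a+1) (2*b) (2*c+1) &
        y (2*a+1) (2*b+1) (2*c) = al a * be b * x (2*a+1) (2*b+1) (2*c)].

(* Main.v *)
Require Import Defs.
From mathcomp Require Import Rstruct.
From HB Require Import structures.
From mathcomp Require Import all_boot all_order all_algebra.
From mathcomp Require Import complex ring.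
Import Order.TTheory GRing.Theory Num.Theory.
Local Open Scope ring_scope.

Lemma two_nz : (2 : C) != 0.
Proof. by rewrite pnatr_eq0. Qed.

Lemma sign_sq {e : C} : is_sign e -> e ^+ 2 = 1.
Proof. by case=> ->; rewrite ?expr1n ?sqrrN ?expr1n. Qed.

Lemma sign_mul {e f : C} : is_sign e -> is_sign f -> is_sign (e * f).
Proof. by case=> -> [] ->; rewrite /is_sign; [left|right|right|left]; ring. Qed.

Lemma sq_sign {e : C} : e ^+ 2 = 1 -> is_sign e.
Proof. by move/eqP; rewrite sqrf_eq1 => /orP [] /eqP; [left|right]. Qed.

Ltac fin := match goal with h : _ = 0 |- _ =>
  apply: (mulfI two_nz); rewrite mulr0;
  first [ by rewrite -h; ring | by rewrite -oppr0 -h; ring ] end.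

Lemma key {s t u A B : C} : is_sign s -> is_sign t -> is_sign u ->
  A != 0 -> B != 0 -> A + B != 0 -> u * (A + B) = s * A + t * B ->
  s = u /\ t = u.
Proof.
move=> hs ht hu hA hB hAB.
move/eqP; rewrite -subr_eq0 => /eqP h.
case: hs h => -> ; case: ht => ->; case: hu => -> h; try by split.
all: exfalso.
all: first [ (move/negP: hA; apply; apply/eqP; fin)
           | (move/negP: hB; apply; apply/eqP; fin)
           | (move/negP: hAB; apply; apply/eqP; fin) ].
Qed.

Lemma const (f : int -> C) : (forall a, f (a + 1) = f a) -> forall a, f a = f 0.
Proof.
move=> H.
have P : forall n : nat, f n = f 0 /\ f (- (n%:Z)) = f 0.
  elim=> [|n [IH1 IH2]]; first by rewrite oppr0.
  split.
    by rewrite -addn1 PoszD H.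
  by rewrite -IH2 -H -addn1 PoszD opprD addrNK.
move=> a; case: (intP a) => [|n|n]; first by [].
  exact: (P n.+1).1.
exact: (P n.+1).2.
Qed.

Lemma step {u s1 s2 t X' X1 X2 X3 X4 X0 : C} :
  X' = (X1*X2+X3*X4)/X0 -> u*X' = (s1*X1*(s2*X2) + t*X3*X4)/X0 ->
  is_sign u -> is_sign s1 -> is_sign s2 -> is_sign t -> X0 != 0 ->
  X1 != 0 -> X2 != 0 -> X3 != 0 -> X4 != 0 -> X' != 0 ->
  s1*s2 = u /\ t = u.
Proof.
move=> hx hy su hs1 hs2 st n0 n1 n2 n3 n4 n'.
apply: (key (sign_mul hs1 hs2) st su (mulf_neq0 n1 n2) (mulf_neq0 n3 n4)).
  have -> : X1*X2+X3*X4 = X'*X0 by rewrite hx divfK.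
  exact: mulf_neq0.
apply: (mulIf (invr_neq0 n0)); transitivity (u*X').
  by rewrite hx; ring.
by rewrite hy; ring.
Qed.

Lemma E2 (b : int) : 2*b+2 = 2*(b+1).
Proof. ring. Qed.

Theorem theorem2p23 (x : arr) :
  nonzero_on_L x -> KHex x ->
  (* (a) *)
  (forall al be ga : int -> C,
     (forall i, is_sign (al i)) -> (forall i, is_sign (be i)) ->
     (forall i, is_sign (ga i)) ->
     forall y : arr, sign_twist al be ga x y -> KHex y) /\
  (* (b) *)
  (forall y : arr, nonzero_on_L y -> KHex y ->
     (forall a b c : int, y (2*a) (2*b) (2*c) = x (2*a) (2*b) (2*c)) ->
     exists al be ga : int -> C,
       [/\ forall i, is_sign (al i), forall i, is_sign (be i),
           forall i, is_sign (ga i) & sign_twist al be ga x y]).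
Proof.
move=> nzx [hx0 [hf1 [hf2 [hf3 hh]]]].
have nX : forall a b c, x (2*a) (2*b+1) (2*c+1) != 0.
  by move=> a b c; apply: nzx; exists (a+b+c+1); ring.
have nY : forall a b c, x (2*a+1) (2*b) (2*c+1) != 0.
  by move=> a b c; apply: nzx; exists (a+b+c+1); ring.
have nZ : forall a b c, x (2*a+1) (2*b+1) (2*c) != 0.
  by move=> a b c; apply: nzx; exists (a+b+c+1); ring.
split.
  move=> al be ga sa sb sg y tw.
  have T0 : forall a b c, y (2*a) (2*b) (2*c) = x (2*a) (2*b) (2*c).
    by move=> a b c; case: (tw a b c).
  have T1 : forall a b c, y (2*a) (2*b+1) (2*c+1) = be b * ga c * x (2*a) (2*b+1) (2*c+1).
    by move=> a b c; case: (tw a b c).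
  have T2 : forall a b c, y (2*a+1) (2*b) (2*c+1) = al a * ga c * x (2*a+1) (2*b) (2*c+1).
    by move=> a b c; case: (tw a b c).
  have T3 : forall a b c, y (2*a+1) (2*b+1) (2*c) = al a * be b * x (2*a+1) (2*b+1) (2*c).
    by move=> a b c; case: (tw a b c).
  split; [|split; [|split; [|split]]].
  - by move=> a b c; rewrite T0.
  - move=> a b c; rewrite !E2 !T0 T1 !exprMn (sign_sq (sb b)) (sign_sq (sg c)) !mul1r.
    by have := hf1 a b c; rewrite !E2.
  - move=> a b c; rewrite !E2 !T0 T2 !exprMn (sign_sq (sa a)) (sign_sq (sg c)) !mul1r.
    by have := hf2 a b c; rewrite !E2.
  - move=> a b c; rewrite !E2 !T0 T3 !exprMn (sign_sq (sa a)) (sign_sq (sb b)) !mul1r.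
    by have := hf3 a b c; rewrite !E2.
  move=> a b c; cbv beta zeta; rewrite !addr0 !E2 !T0 !T1 !T2 !T3.
  have := hh a b c; cbv beta zeta; rewrite !addr0 !E2; case=> e1 e2 e3 e4.
  rewrite e1 e2 e3 e4.
  by split; case: (sa a) => ->; case: (sb b) => ->; case: (sg c) => ->; ring.
move=> y nzy [hy0 [g1 [g2 [g3 gh]]]] hyx.
pose ex := fun a b c => y (2*a) (2*b+1) (2*c+1) / x (2*a) (2*b+1) (2*c+1).
pose ey := fun a b c => y (2*a+1) (2*b) (2*c+1) / x (2*a+1) (2*b) (2*c+1).
pose ez := fun a b c => y (2*a+1) (2*b+1) (2*c) / x (2*a+1) (2*b+1) (2*c).
have HX : forall a b c, y (2*a) (2*b+1) (2*c+1) = ex a b c * x (2*a) (2*b+1) (2*c+1).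
  by move=> a b c; rewrite /ex divfK.
have HY : forall a b c, y (2*a+1) (2*b) (2*c+1) = ey a b c * x (2*a+1) (2*b) (2*c+1).
  by move=> a b c; rewrite /ey divfK.
have HZ : forall a b c, y (2*a+1) (2*b+1) (2*c) = ez a b c * x (2*a+1) (2*b+1) (2*c).
  by move=> a b c; rewrite /ez divfK.
have SX : forall a b c, is_sign (ex a b c).
  move=> a b c; apply: sq_sign; rewrite /ex expr_div_n.
  have -> : y (2*a) (2*b+1) (2*c+1) ^+ 2 = x (2*a) (2*b+1) (2*c+1) ^+ 2.
    by rewrite g1 hf1 !E2 !hyx.
  by rewrite divff // expf_neq0.
have SY : forall a b c, is_sign (ey a b c).
  move=> a b c; apply: sq_sign; rewrite /ey expr_div_n.
  have -> : y (2*a+1) (2*b) (2*c+1) ^+ 2 = x (2*a+1) (2*b) (2*c+1) ^+ 2.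
    by rewrite g2 hf2 !E2 !hyx.
  by rewrite divff // expf_neq0.
have SZ : forall a b c, is_sign (ez a b c).
  move=> a b c; apply: sq_sign; rewrite /ez expr_div_n.
  have -> : y (2*a+1) (2*b+1) (2*c) ^+ 2 = x (2*a+1) (2*b+1) (2*c) ^+ 2.
    by rewrite g3 hf3 !E2 !hyx.
  by rewrite divff // expf_neq0.
have HEX : forall a b c, (ey a b c * ez a b c = ex (a+1) b c /\ ex a b c = ex (a+1) b c) /\
   (ex a b c * ez a b c = ey a (b+1) c /\ ey a b c = ey a (b+1) c) /\
   (ex a b c * ey a b c = ez a b (c+1) /\ ez a b c = ez a b (c+1)).
  move=> a b c.
  have := hh a b c; have := gh a b c; cbv beta zeta.
  rewrite !addr0 !E2 !HX !HY !HZ !hyx.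
  case=> y1 y2 y3 _ [x1 x2 x3 _].
  have [h1 h2] := step x1 y1 (SX _ _ _) (SY _ _ _) (SZ _ _ _) (SX _ _ _) (hx0 _ _ _)
     (nY _ _ _) (nZ _ _ _) (nX _ _ _) (hx0 _ _ _) (nX _ _ _).
  have [h3 h4] := step x2 y2 (SY _ _ _) (SX _ _ _) (SZ _ _ _) (SY _ _ _) (hx0 _ _ _)
     (nX _ _ _) (nZ _ _ _) (nY _ _ _) (hx0 _ _ _) (nY _ _ _).
  have [h5 h6] := step x3 y3 (SZ _ _ _) (SX _ _ _) (SY _ _ _) (SZ _ _ _) (hx0 _ _ _)
     (nX _ _ _) (nY _ _ _) (nZ _ _ _) (hx0 _ _ _) (nZ _ _ _).
  by [].
have KX : forall a b c, ex a b c = ex 0 b c.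
  by move=> a b c; apply: (const (fun a => ex a b c)) => a'; case: (HEX a' b c) => [[_ ->]].
have KY : forall a b c, ey a b c = ey a 0 c.
  by move=> a b c; apply: (const (fun b => ey a b c)) => b'; case: (HEX a b' c) => [_ [[_ ->]]].
have KZ : forall a b c, ez a b c = ez a b 0.
  by move=> a b c; apply: (const (fun c => ez a b c)) => c'; case: (HEX a b c') => [_ [_ [_ ->]]].
have R : forall a b c, ex a b c = ey a b c * ez a b c.
  by move=> a b c; case: (HEX a b c) => [[-> ->]].
have R' : forall a b c, ey a b c = ex a b c * ez a b c.
  by move=> a b c; rewrite R -mulrA -expr2 (sign_sq (SZ a b c)) mulr1.
have R'' : forall a b c, ez a b c = ex a b c * ey a b c.
  by move=> a b c; rewrite R mulrAC -expr2 (sign_sq (SY a b c)) mul1r.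
exists (fun a => ez a 0 0), (fun b => ez 0 b 0 * ez 0 0 0), (fun c => ey 0 0 c * ez 0 0 0).
split.
- by [].
- by move=> b; apply: sign_mul.
- by move=> c; apply: sign_mul.
move=> a b c; split.
- by rewrite hyx.
- rewrite HX; congr (_ * _).
  rewrite (KX a b c) (R 0 b c) (KY 0 b c) (KZ 0 b c).
  by case: (SZ 0 0 0) => ->; ring.
- rewrite HY; congr (_ * _).
  rewrite (KY a b c) (R' a 0 c) (KX a 0 c) (R 0 0 c) (KZ a 0 c) (KZ 0 0 c).
  by case: (SZ 0 0 0) => ->; ring.
- rewrite HZ; congr (_ * _).
  rewrite (KZ a b c) (R'' a b 0) (KX a b 0) (KY a b 0) (R 0 b 0) (KY 0 b 0) (R' a 0 0) (KX a 0 0) (R 0 0 0).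
  by case: (SY 0 0 0) => ->; case: (SZ 0 0 0) => ->; ring.
Qed.
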